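(* Let $\lambda\in[0,1]$. For every $\alpha$ with $1\le\alpha<\max\left\{\frac{\sqrt{\lambda^2-2\lambda+5}-\lambda+1}{2},\frac{2(1-\lambda)}{2\lambda+1}\right\}$, there exists an instance with the weighted single metric loss with parameter $\lambda$ in which no clustering is in the $\alpha$-core.
   Context: Instance: finite nonempty set $\mathcal{N}$ of $n$ agents, finite nonempty set $\mathcal{M}$ of feasible centers, positive integer $k$, pseudometric $d$ on $\mathcal{N}\cup\mathcal{M}$. Weighted single metric loss: $\ell_i(C,x)=\lambda\max_{j\in C}d(i,j)+(1-\lambda)d(i,x)$ for $i\in C\subseteq\mathcal{N}$, $x\in\mathcal{M}$. A clustering is $\mathcal{X}=\{(C_1,x_1),\dots,(C_k,x_k)\}$ with $C_t$ pairwise disjoint (some possibly empty), union $\mathcal{N}$, $x_t\in\mathcal{M}$; $\ell_i(\mathcal{X})=\ell_i(C_t,x_t)$ where $i\in C_t$. For $\alpha\ge1$, $\mathcal{X}$ is in the $\alpha$-core if there is no $S\subseteq\mathcal{N}$ with $|S|\ge n/k$ and $y\in\mathcal{M}$ with $\alpha\,\ell_i(S,y)<\ell_i(\mathcal{X})$ for all $i\in S$. *)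

(* Defs.v *)
From HB Require Import structures.
From mathcomp Require Import all_boot all_order all_algebra.
From mathcomp Require Import reals.
Set Implicit Arguments. Unset Strict Implicit. Unset Printing Implicit Defensive.
Import Order.TTheory GRing.Theory Num.Theory.
Local Open Scope ring_scope.

(* Agents N are the finite type A, feasible centers M the finite type C;
   the pseudometric lives on the disjoint union A + C (an overlapping
   N ∪ M is captured by points at distance 0). *)
Definition pt (A C : finType) := (A + C)%type.

Definition is_pseudometric (R : realType) (T : Type) (d : T -> T -> R) :=
  [/\ forall x, d x x = 0,
      forall x y, d x y = d y x &
      forall x y z, d x z <= d x y + d y z].

Definition wsm_loss (R : realType) (A C : finType) (d : pt A C -> pt A C -> R)
  (lam : R) (S : {set A}) (x : C) (i : A) : R :=
  lam * (\big[Num.max/0]_(j in S) d (inl i) (inl j)) + (1 - lam) * d (inl i) (inr x).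

(* A clustering {(C_1,x_1),...,(C_k,x_k)} is encoded by an assignment
   sigma : A -> 'I_k (C_t = sigma^-1(t), possibly empty; pairwise disjoint,
   covering A) together with centers x : 'I_k -> C. *)
Definition cluster_of (A : finType) (k : nat) (sigma : A -> 'I_k) (t : 'I_k) : {set A} :=
  [set j | sigma j == t].

Definition clustering_loss (R : realType) (A C : finType) (k : nat)
  (d : pt A C -> pt A C -> R) (lam : R) (sigma : A -> 'I_k) (x : 'I_k -> C) (i : A) : R :=
  wsm_loss d lam (cluster_of sigma (sigma i)) (x (sigma i)) i.

Definition in_alpha_core (R : realType) (A C : finType) (k : nat)
  (d : pt A C -> pt A C -> R) (lam alpha : R) (sigma : A -> 'I_k) (x : 'I_k -> C) : Prop :=
  ~ exists (S : {set A}) (y : C),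
      (#|A|%:R / k%:R <= #|S|%:R :> R) /\
      forall i, i \in S -> alpha * wsm_loss d lam S y i < clustering_loss d lam sigma x i.

(* Main.v *)
Require Import Defs.
From HB Require Import structures.
From mathcomp Require Import all_boot all_order all_algebra.
From mathcomp Require Import reals.
From mathcomp Require Import lra.
Set Implicit Arguments. Unset Strict Implicit. Unset Printing Implicit Defensive.
Import Order.TTheory GRing.Theory Num.Theory.
Local Open Scope ring_scope.

Definition P3 := (bool * 'I_3)%type.

Definition acd (R : realType) (lam : R) (i j : 'I_3) : R :=
  let dl := ((val i + 3 - val j) %% 3)%N in
  if dl == 0%N then 1 else if dl == 1%N then 2 + lam else 4 + lam.

Definition kd (R : realType) (lam : R) (p q : pt P3 P3) : R :=
  match p, q with
  | inl a, inl b => if val a.2 == val b.2 then 0 else 3 + lam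
  | inr a, inr b => if val a.2 == val b.2 then 0 else 3 + lam
  | inl a, inr c => acd lam a.2 c.2
  | inr c, inl a => acd lam a.2 c.2
  end.

Definition grp (p : pt P3 P3) : bool :=
  match p with inl a => a.1 | inr c => c.1 end.

Definition dd (R : realType) (lam L : R) (p q : pt P3 P3) : R :=
  if grp p == grp q then kd lam p q else L.

Ltac ord3 i := let H := fresh in case: i => [[|[|[|i]]] H] //.

Lemma kd_tri (R : realType) (lam : R) : 0 <= lam <= 1 ->
  forall p q r : pt P3 P3, kd lam p r <= kd lam p q + kd lam q r.
Proof.
move=> /andP[l0 l1].
move=> [[b i]|[b i]] [[b' j]|[b' j]] [[b'' k]|[b'' k]];
  ord3 i; ord3 j; ord3 k; rewrite /kd /acd /=; lra.
Qed.

Lemma kd_ge0 (R : realType) (lam : R) : 0 <= lam ->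
  forall p q : pt P3 P3, 0 <= kd lam p q <= 4 + lam.
Proof.
move=> l0 [[b i]|[b i]] [[b' j]|[b' j]]; ord3 i; ord3 j; rewrite /kd /acd /=; lra.
Qed.

Lemma kd_sym (R : realType) (lam : R) (p q : pt P3 P3) : kd lam p q = kd lam q p.
Proof.
case: p q => [[b i]|[b i]] [[b' j]|[b' j]]; ord3 i; ord3 j.
Qed.

Lemma dd_pm (R : realType) (lam L : R) : 0 <= lam <= 1 -> 3 <= L ->
  is_pseudometric (dd lam L).
Proof.
move=> hl hL; have /andP[l0 l1] := hl; split.
- move=> [[b i]|[b i]]; rewrite /dd eqxx /kd eqxx //.
- move=> p q; rewrite /dd eq_sym kd_sym //.
- move=> p q r; rewrite /dd.
  have h1 := kd_ge0 l0 p q; have h2 := kd_ge0 l0 q r; have h3 := kd_ge0 l0 p r.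
  case: (grp p) (grp q) (grp r) => [] [] [] /=; try lra; exact: kd_tri.
Qed.



Lemma bmax_ge (R : realType) (I : eqType) (s : seq I) (P : pred I) (F : I -> R) j :
  j \in s -> P j -> F j <= \big[Num.max/0]_(i <- s | P i) F i.
Proof.
elim: s => //= a s IH; rewrite inE big_cons; case/orP => [/eqP-> | js] Pj.
  by rewrite Pj le_max lexx.
case: (P a); last exact: IH.
by rewrite le_max IH ?orbT.
Qed.

Lemma bmax_le (R : realType) (I : Type) (s : seq I) (P : pred I) (F : I -> R) B :
  0 <= B -> (forall i, P i -> F i <= B) -> \big[Num.max/0]_(i <- s | P i) F i <= B.
Proof.
move=> B0 H; elim/big_ind: _ => //.
by move=> u v hu hv; rewrite ge_max hu hv.
Qed.

Lemma bmax_ge0 (R : realType) (I : Type) (s : seq I) (P : pred I) (F : I -> R) :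
  (forall i, P i -> 0 <= F i) -> 0 <= \big[Num.max/0]_(i <- s | P i) F i.
Proof.
move=> H; elim/big_ind: _ => //.
by move=> u v hu hv; rewrite le_max hu.
Qed.

Definition nx (j : 'I_3) : 'I_3 := @Ordinal 3 ((j.+1) %% 3) (@ltn_pmod _ 3 isT).

Lemma acd0 (R : realType) (lam : R) j : acd lam j j = 1.
Proof. by ord3 j. Qed.
Lemma acd1 (R : realType) (lam : R) j : acd lam (nx j) j = 2 + lam.
Proof. by ord3 j. Qed.
Lemma acd2 (R : realType) (lam : R) j : acd lam (nx (nx j)) j = 4 + lam.
Proof. by ord3 j. Qed.
Lemma acd_ge (R : realType) (lam : R) i j : 0 <= lam -> i != j -> 2 + lam <= acd lam i j.
Proof. move=> l0; ord3 i; ord3 j; rewrite /acd /= => _; lra. Qed.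
Lemma acd_le (R : realType) (lam : R) i j : 0 <= lam -> acd lam i j <= 4 + lam.
Proof. move=> l0; ord3 i; ord3 j; rewrite /acd /=; lra. Qed.
Lemma nx_neq j : nx j != j. Proof. by ord3 j. Qed.
Lemma nx2_neq j : nx (nx j) != j. Proof. by ord3 j. Qed.
Lemma nx2_neq' j : nx (nx j) != nx j. Proof. by ord3 j. Qed.

Lemma dAC (R : realType) (lam L : R) g i j :
  dd lam L (inl (g, i)) (inr (g, j)) = acd lam i j.
Proof. by rewrite /dd /= eqxx. Qed.
Lemma dAA (R : realType) (lam L : R) g i j : i != j ->
  dd lam L (inl (g, i)) (inl (g, j)) = 3 + lam.
Proof. by move=> h; rewrite /dd /= eqxx /= ifN. Qed.
Lemma dfar (R : realType) (lam L : R) (a c : P3) : a.1 != c.1 ->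
  dd lam L (inl a) (inr c) = L.
Proof. by move=> h; rewrite /dd /= ifN. Qed.

Lemma pick_group (x : 'I_3 -> P3) :
  exists g, (forall t, (x t).1 != g) \/ exists t0, forall t, ((x t).1 == g) = (t == t0).
Proof.
have ord3P : forall t : 'I_3, t = @Ordinal 3 0 isT \/ t = @Ordinal 3 1 isT \/ t = @Ordinal 3 2 isT.
  by move=> t; ord3 t; [left|right;left|right;right]; apply: val_inj.
case E0: (x (@Ordinal 3 0 isT)).1; case E1: (x (@Ordinal 3 1 isT)).1;
  case E2: (x (@Ordinal 3 2 isT)).1.
- by exists false; left=> t; case: (ord3P t) => [->|[->|->]]; rewrite ?E0 ?E1 ?E2.
- by exists false; right; exists (@Ordinal 3 2 isT) => t; case: (ord3P t) => [->|[->|->]]; rewrite ?E0 ?E1 ?E2.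
- by exists false; right; exists (@Ordinal 3 1 isT) => t; case: (ord3P t) => [->|[->|->]]; rewrite ?E0 ?E1 ?E2.
- by exists true; right; exists (@Ordinal 3 0 isT) => t; case: (ord3P t) => [->|[->|->]]; rewrite ?E0 ?E1 ?E2.
- by exists false; right; exists (@Ordinal 3 0 isT) => t; case: (ord3P t) => [->|[->|->]]; rewrite ?E0 ?E1 ?E2.
- by exists true; right; exists (@Ordinal 3 1 isT) => t; case: (ord3P t) => [->|[->|->]]; rewrite ?E0 ?E1 ?E2.
- by exists true; right; exists (@Ordinal 3 2 isT) => t; case: (ord3P t) => [->|[->|->]]; rewrite ?E0 ?E1 ?E2.
- by exists true; left=> t; case: (ord3P t) => [->|[->|->]]; rewrite ?E0 ?E1 ?E2.
Qed.


Lemma dd_ge0 (R : realType) (lam L : R) p q : 0 <= lam -> 0 <= L -> 0 <= dd lam L p q.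
Proof.
move=> l0 L0; rewrite /dd; case: ifP => // _.
by case/andP: (kd_ge0 l0 p q).
Qed.

Lemma dd_same (R : realType) (lam L : R) (a c : P3) : a.1 = c.1 ->
  dd lam L (inl a) (inr c) = acd lam a.2 c.2.
Proof. by move=> h; rewrite /dd /= h eqxx. Qed.

Lemma loss_lb (R : realType) (lam L : R) (sigma : P3 -> 'I_3) (x : 'I_3 -> P3) a b :
  0 <= lam -> sigma b = sigma a ->
  lam * dd lam L (inl a) (inl b) + (1 - lam) * dd lam L (inl a) (inr (x (sigma a)))
  <= clustering_loss (dd lam L) lam sigma x a.
Proof.
move=> l0 hb; rewrite /clustering_loss /wsm_loss lerD2r; apply: (ler_wpM2l l0).
apply: (@bmax_ge R _ _ (fun j => j \in cluster_of sigma (sigma a))).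
  exact: mem_index_enum.
by rewrite /cluster_of inE hb.
Qed.

Lemma loss_far (R : realType) (lam L : R) (sigma : P3 -> 'I_3) (x : 'I_3 -> P3) a :
  0 <= lam -> lam <= 1 -> 0 <= L -> (x (sigma a)).1 != a.1 ->
  (1 - lam) * L <= clustering_loss (dd lam L) lam sigma x a.
Proof.
move=> l0 l1 L0 hf; rewrite /clustering_loss /wsm_loss dfar; last by rewrite eq_sym.
rewrite lerDr; apply: mulr_ge0 => //; apply: bmax_ge0 => j _; exact: dd_ge0.
Qed.

Lemma wsm_ub (R : realType) (lam L : R) (p q y i : P3) :
  0 <= lam -> lam <= 1 -> p.1 = q.1 -> i \in [set p; q] ->
  wsm_loss (dd lam L) lam [set p; q] y i <=
  lam * (3 + lam) + (1 - lam) * dd lam L (inl i) (inr y).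
Proof.
move=> l0 l1 hpq hi; rewrite /wsm_loss lerD2r; apply: (ler_wpM2l l0).
apply: bmax_le; first lra.
move=> j hj; rewrite /dd /=.
have gi : i.1 = p.1 by move: hi; rewrite !inE => /orP[] /eqP->.
have gj : j.1 = p.1 by move: hj; rewrite !inE => /orP[] /eqP->.
rewrite gi gj eqxx; case: ifP => _; lra.
Qed.

Lemma mul_lt (R : realType) (a w W V c : R) :
  0 <= a -> w <= W -> a * W < V -> V <= c -> a * w < c.
Proof.
move=> a0 wW h Vc; apply: le_lt_trans (ler_wpM2l a0 wW) _; exact: lt_le_trans h Vc.
Qed.

Lemma in_lb (R : realType) (lam L : R) (sigma : P3 -> 'I_3) (x : 'I_3 -> P3) t0 jc m b :
  0 <= lam -> sigma m = t0 -> sigma b = t0 -> m.1 = b.1 -> m.2 != b.2 ->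
  x t0 = (m.1, jc) ->
  lam * (3 + lam) + (1 - lam) * acd lam m.2 jc <= clustering_loss (dd lam L) lam sigma x m.
Proof.
move=> l0; case: m => g i; case: b => g' j /= hm hb gmb nmb hx.
subst g'.
have := loss_lb L x l0 (etrans hb (esym hm)).
by rewrite hm hx dd_same //= dAA.
Qed.


Definition viol (R : realType) (lam a L : R) (sigma : P3 -> 'I_3) (x : 'I_3 -> P3) :=
  exists p q y : P3, [/\ p != q, p.1 = q.1,
     a * wsm_loss (dd lam L) lam [set p; q] y p < clustering_loss (dd lam L) lam sigma x p &
     a * wsm_loss (dd lam L) lam [set p; q] y q < clustering_loss (dd lam L) lam sigma x q].

Lemma far_ok (R : realType) (lam a L : R) (sigma : P3 -> 'I_3) (x : 'I_3 -> P3) p q y i :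
  0 <= lam -> lam < 1 -> 1 <= a -> a * (1 + lam) < 2 -> (1 - lam) * L = 8 -> 0 <= L ->
  p.1 = q.1 -> y.1 = p.1 -> i \in [set p; q] -> (x (sigma i)).1 != i.1 ->
  a * wsm_loss (dd lam L) lam [set p; q] y i < clustering_loss (dd lam L) lam sigma x i.
Proof.
move=> l0 l1 a1 ha hL L0 hpq hy hi hf.
have gi : i.1 = p.1 by move: hi; rewrite !inE => /orP[] /eqP->.
have hw := wsm_ub L y l0 (ltW l1) hpq hi.
rewrite dd_same in hw; last by rewrite gi hy.
have h := acd_le i.2 y.2 l0.
have h2 : (1 - lam) * acd lam i.2 y.2 <= (1 - lam) * (4 + lam).
  by apply: ler_wpM2l => //; lra.
have hw4 : wsm_loss (dd lam L) lam [set p; q] y i <= 4 by lra.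
have hlf := @loss_far _ lam L sigma x i l0 (ltW l1) L0 hf.
rewrite hL in hlf.
apply: mul_lt hw4 _ hlf; [lra | nra].
Qed.

Lemma R1 (R : realType) (lam a : R) : 0 <= lam -> a * (1 + lam) < 2 ->
  a * (lam * (3 + lam) + (1 - lam) * 1) < lam * (3 + lam) + (1 - lam) * (2 + lam).
Proof. move=> l0 h; nra. Qed.

Lemma R2 (R : realType) (lam a : R) : 0 <= lam -> a * (1 + lam) < 2 ->
  a * (lam * (3 + lam) + (1 - lam) * (2 + lam)) < lam * (3 + lam) + (1 - lam) * (4 + lam).
Proof. move=> l0 h; nra. Qed.


Lemma farpair (R : realType) (lam a L : R) (sigma : P3 -> 'I_3) (x : 'I_3 -> P3) p q :
  0 <= lam -> lam < 1 -> 1 <= a -> a * (1 + lam) < 2 -> (1 - lam) * L = 8 -> 0 <= L ->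
  p != q -> p.1 = q.1 -> (x (sigma p)).1 != p.1 -> (x (sigma q)).1 != q.1 ->
  viol lam a L sigma x.
Proof.
move=> l0 l1 a1 ha hL L0 npq hpq fp fq.
exists p, q, (p.1, ord0); split => //; apply: far_ok => //; by rewrite !inE eqxx ?orbT.
Qed.

Lemma mem_ok (R : realType) (lam a L : R) (sigma : P3 -> 'I_3) (x : 'I_3 -> P3) t0 jc
   (m b : P3) (p q y : P3) :
  0 <= lam -> lam < 1 -> 1 <= a -> a * (1 + lam) < 2 ->
  p.1 = q.1 -> m \in [set p; q] -> y = (m.1, m.2) ->
  sigma m = t0 -> sigma b = t0 -> m.1 = b.1 -> m.2 != b.2 -> x t0 = (m.1, jc) -> m.2 != jc ->
  a * wsm_loss (dd lam L) lam [set p; q] y m < clustering_loss (dd lam L) lam sigma x m.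
Proof.
move=> l0 l1 a1 ha hpq hm hy sm sb gmb nmb hx nj.
have hw := wsm_ub L y l0 (ltW l1) hpq hm.
rewrite dd_same hy /= ?acd0 in hw => //.
have hl := in_lb L l0 sm sb gmb nmb hx.
have h := acd_ge l0 nj.
have h2 : (1 - lam) * (2 + lam) <= (1 - lam) * acd lam m.2 jc.
  by apply: ler_wpM2l => //; lra.
rewrite hy; apply: (mul_lt _ hw _ hl); first lra.
have := R1 l0 ha; lra.
Qed.

Ltac neqs := first [ done | by rewrite !inE eqxx ?orbT | exact: nx_neq | exact: nx2_neq
  | exact: nx2_neq' | by rewrite eq_sym; first [exact: nx_neq | exact: nx2_neq | exact: nx2_neq']].

Lemma key (R : realType) (lam a L : R) (sigma : P3 -> 'I_3) (x : 'I_3 -> P3) :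
  0 <= lam -> lam < 1 -> 1 <= a -> a * (1 + lam) < 2 -> (1 - lam) * L = 8 -> 0 <= L ->
  viol lam a L sigma x.
Proof.
move=> l0 l1 a1 ha hL L0.
have [g [Hn | [t0 Ht0]]] := pick_group x.
  apply: (@farpair _ _ _ _ _ _ (g, ord0) (g, nx ord0)) => //.
  by rewrite xpair_eqE eqxx.
have Hg : (x t0).1 = g by apply/eqP; rewrite Ht0.
set jc := (x t0).2.
have hx : x t0 = (g, jc) by rewrite -Hg /jc -surjective_pairing.
have infar : forall a : P3, a.1 = g -> (x (sigma a)).1 != a.1 \/ sigma a = t0.
  move=> b hb; case E: ((x (sigma b)).1 == g).
    by right; apply/eqP; rewrite -Ht0 E.
  by left; rewrite hb E.
have n10 : (g, nx jc) != (g, jc) by rewrite xpair_eqE eqxx /= nx_neq.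
have n20 : (g, nx (nx jc)) != (g, jc) by rewrite xpair_eqE eqxx /= nx2_neq.
have n12 : (g, nx jc) != (g, nx (nx jc)) by rewrite xpair_eqE eqxx /= eq_sym nx2_neq'.
case: (infar (g, nx jc)) => // [f1|i1]; case: (infar (g, nx (nx jc))) => // [f2|i2].
- exact: (farpair _ _ _ _ _ _ n12).
- case: (infar (g, jc)) => // [f0|i0].
    by apply: (farpair _ _ _ _ _ _ n10).
  exists (g, nx (nx jc)), (g, nx jc), (g, nx (nx jc)); split => //.
    by rewrite eq_sym.
    by apply: (@mem_ok _ _ _ _ _ _ t0 jc _ (g, jc)) => //; neqs.
  by apply: far_ok => //; rewrite !inE eqxx ?orbT.
- case: (infar (g, jc)) => // [f0|i0].
    by apply: (farpair _ _ _ _ _ _ n20).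
  exists (g, nx jc), (g, nx (nx jc)), (g, nx jc); split => //.
    by apply: (@mem_ok _ _ _ _ _ _ t0 jc _ (g, jc)) => //; neqs.
  by apply: far_ok => //; rewrite !inE eqxx ?orbT.
- exists (g, nx jc), (g, nx (nx jc)), (g, nx jc); split => //.
    by apply: (@mem_ok _ _ _ _ _ _ t0 jc _ (g, nx (nx jc))) => //; neqs.
  have hm2 : (g, nx (nx jc)) \in [set (g, nx jc); (g, nx (nx jc))] by rewrite !inE eqxx orbT.
  have hw := @wsm_ub _ lam L (g, nx jc) (g, nx (nx jc)) (g, nx jc) _ l0 (ltW l1) (erefl _) hm2.
  rewrite dd_same //= acd1 in hw.
  have hl := @in_lb _ lam L sigma x t0 jc (g, nx (nx jc)) (g, nx jc) l0 i2 i1 (erefl _) (nx2_neq' jc) hx.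
  rewrite /= acd2 in hl.
  apply: (mul_lt _ hw _ hl); first lra.
  exact: R2 l0 ha.
Qed.


Lemma bound (R : realType) (lam a : R) : 0 <= lam <= 1 -> 1 <= a ->
  a < Num.max ((Num.sqrt (lam ^+ 2 - 2 * lam + 5) - lam + 1) / 2)
              (2 * (1 - lam) / (2 * lam + 1)) -> a * (1 + lam) < 2.
Proof.
move=> /andP[l0 l1] a1; rewrite lt_max => /orP[h|h].
  set s := Num.sqrt _ in h.
  have z0 : 0 <= lam ^+ 2 - 2 * lam + 5 by rewrite expr2; nra.
  have hs : s ^+ 2 = lam ^+ 2 - 2 * lam + 5 by rewrite sqr_sqrtr.
  have s0 : 0 <= s by apply: sqrtr_ge0.
  rewrite ltr_pdivlMr // in h.
  rewrite ltNge; apply/negP => hc.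
  have ht : lam ^+ 2 + 3 < s * (1 + lam) by rewrite expr2; nra.
  have ht2 : (lam ^+ 2 + 3) ^+ 2 < (s * (1 + lam)) ^+ 2.
    rewrite ltr_pXn2r // ?nnegrE; last by nra.
    by rewrite expr2; nra.
  move: ht2; rewrite exprMn hs !expr2; nra.
have p0 : 0 < 2 * lam + 1 by lra.
rewrite ltr_pdivlMr // in h; nra.
Qed.

Unset Implicit Arguments.

Theorem mainTheorem11 (R : realType) (lam : R) :
  0 <= lam <= 1 ->
  forall alpha : R,
    1 <= alpha ->
    alpha < Num.max ((Num.sqrt (lam ^+ 2 - 2 * lam + 5) - lam + 1) / 2)
                    (2 * (1 - lam) / (2 * lam + 1)) ->
    exists (A C : finType) (k : nat) (d : pt A C -> pt A C -> R),
      [/\ (0 < #|A|)%N, (0 < #|C|)%N, (0 < k)%N, is_pseudometric d &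
        forall (sigma : A -> 'I_k) (x : 'I_k -> C),
          ~ in_alpha_core d lam alpha sigma x].
Proof.
move=> hl a a1 ha.
have hb := bound hl a1 ha.
have /andP[l0 l1'] := hl.
have l1 : lam < 1 by nra.
pose L := 8 / (1 - lam).
have hL : (1 - lam) * L = 8 by rewrite /L mulrC -mulrA mulVf ?mulr1 //; lra.
have L3 : 3 <= L.
  rewrite /L ler_pdivlMr; last lra.
  lra.
exists P3, P3, 3%N, (dd lam L); split => //.
- by rewrite card_prod card_bool card_ord.
- by rewrite card_prod card_bool card_ord.
- by apply: dd_pm.

move=> sigma x Hc; apply: Hc.
have [p [q [y [npq hpq h1 h2]]]] := key sigma x l0 l1 a1 hb hL (le_trans (ler0n _ 3) L3).
exists [set p; q], y; split.
  rewrite cards2 npq card_prod card_bool card_ord /=.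
  by rewrite ler_pdivrMr ?ltr0n // -natrM ler_nat.
by move=> i; rewrite !inE => /orP[] /eqP->.
Qed.
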